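(* Let $A,B$ be idempotent torsion-free $\Gamma$-graded rings and let $F:A\text{-gr}\to B\text{-gr}$ and $G:B\text{-gr}\to A\text{-gr}$ be inverse graded category equivalences. Set $P=G(B)$ and $Q=F(A)$, with right actions $p\cdot b=G(\rho_b)(p)$ and $q\cdot a=F(\rho_a)(q)$. Then there are natural graded isomorphisms of functors $G\cong A\cdot\mathrm{HOM}_B(F(A),-)=A\cdot\mathrm{HOM}_B(Q,-)$ and $F\cong B\cdot\mathrm{HOM}_A(G(B),-)=B\cdot\mathrm{HOM}_A(P,-)$.
   Context: $\Gamma$ is a fixed multiplicative group. Rings are associative $\Gamma$-graded, not necessarily unital. $A$ is idempotent if $A^2=A$, torsion-free if $Aa=0\Rightarrow a=0$ and $aA=0\Rightarrow a=0$. A graded module is unital if $AM=M$, torsion-free if $Am=0\Rightarrow m=0$. $A\text{-gr}$ is the category of unital torsion-free graded left $A$-modules with degree-preserving maps. Suspension: $M(\sigma)_\tau=M_{\tau\sigma}$. A graded functor is an additive functor commuting with suspensions ($F(M(\sigma))=F(M)(\sigma)$); a graded category equivalence is a graded functor which is an equivalence. A left-linear $f$ is graded of degree $\sigma$ if $f(M_\tau)\subseteq N_{\tau\sigma}$; $\mathrm{HOM}$ is the direct sum over all degrees. Since $\mathrm{HOM}_A(M,N)_\sigma=\mathrm{Hom}_{A\text{-gr}}(M(\sigma^{-1}),N)$, $F$ induces maps on $\mathrm{HOM}$, still denoted $F$. $\rho_a$ is right multiplication by $a$ on $A$. For $N\in B\text{-gr}$, $\mathrm{HOM}_B(Q,N)$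 is a left $A$-module via $(af)(q)=f(qa)$ and $A\cdot\mathrm{HOM}_B(Q,N)$ denotes the finite sums $\sum a_if_i$; similarly $\mathrm{HOM}_A(P,M)$ is a left $B$-module via $(bf)(p)=f(pb)$. *)

(* Defs.v *)
From HB Require Import structures.
From mathcomp Require Import all_boot all_algebra.
Set Implicit Arguments. Unset Strict Implicit. Unset Printing Implicit Defensive.
Import GRing.Theory.
Local Open Scope ring_scope.

Section Defs.
Variable Gam : groupType.

(* D : Gam -> V -> Prop is a grading of the abelian group V:
   V = (+)_s D s (internal direct sum of subgroups). *)
Definition is_grading (V : zmodType) (D : Gam -> V -> Prop) : Prop :=
  [/\ (forall s, D s 0),
      (forall s x y, D s x -> D s y -> D s (x - y)),
      (forall v : V, exists n (d : 'I_n -> Gam) (x : 'I_n -> V),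
          (forall i, D (d i) (x i)) /\ v = \sum_(i < n) x i) &
      (forall n (d : 'I_n -> Gam) (x : 'I_n -> V), injective d ->
          (forall i, D (d i) (x i)) -> \sum_(i < n) x i = 0 ->
          forall i, x i = 0)].

Record nuRing := NuRing {
  nr_car :> zmodType;
  nr_mul : nr_car -> nr_car -> nr_car;
  nr_mulA : associative nr_mul;
  nr_mulDl : left_distributive nr_mul +%R;
  nr_mulDr : right_distributive nr_mul +%R }.

Record grRing := GrRing {
  gr_base :> nuRing;
  gr_deg : Gam -> nr_car gr_base -> Prop;
  gr_grading : is_grading gr_deg;
  gr_mul_deg : forall s t a b, gr_deg s a -> gr_deg t b ->
                 gr_deg (s * t)%g (nr_mul a b) }.

(* A^2 = A *)
Definition gr_idempotent (A : grRing) : Prop :=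
  forall a : A, exists n (x y : 'I_n -> A), a = \sum_(i < n) nr_mul (x i) (y i).

Definition gr_torsionfree (A : grRing) : Prop :=
  (forall a : A, (forall b : A, nr_mul b a = 0) -> a = 0) /\
  (forall a : A, (forall b : A, nr_mul a b = 0) -> a = 0).

(* objects of A-gr: unital torsion-free graded left A-modules *)
Record grObj (A : grRing) := GrObj {
  go_car :> zmodType;
  go_act : A -> go_car -> go_car;
  go_actDl : forall (a b : A) m, go_act (a + b) m = go_act a m + go_act b m;
  go_actDr : forall a (m n : go_car), go_act a (m + n) = go_act a m + go_act a n;
  go_actA : forall a b m, go_act (nr_mul a b) m = go_act a (go_act b m);
  go_deg : Gam -> go_car -> Prop;
  go_grading : is_grading go_deg;
  go_act_deg : forall s t a m, gr_deg s a -> go_deg t m ->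
                 go_deg (s * t)%g (go_act a m);
  go_unital : forall m, exists n (a : 'I_n -> A) (x : 'I_n -> go_car),
                 m = \sum_(i < n) go_act (a i) (x i);
  go_tfree : forall m, (forall a, go_act a m = 0) -> m = 0 }.

Section Mod.
Variable A : grRing.

Definition is_grmap (s : Gam) (M N : grObj A) (f : M -> N) : Prop :=
  [/\ (forall x y, f (x + y) = f x + f y),
      (forall a x, f (go_act a x) = go_act a (f x)) &
      (forall t x, go_deg t x -> go_deg (t * s)%g (f x))].

Definition is_grhom (M N : grObj A) (f : M -> N) : Prop :=
  [/\ (forall x y, f (x + y) = f x + f y),
      (forall a x, f (go_act a x) = go_act a (f x)) &
      (forall t x, go_deg t x -> go_deg t (f x))].

Definition grHom (M N : grObj A) := {f : M -> N | is_grhom f}.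

(* suspension M(s)_t = M_(t s) *)
Lemma susp_grading (M : grObj A) (s : Gam) :
  is_grading (fun t (m : M) => go_deg (t * s)%g m).
Proof.
have [H0 HB HS HI] := go_grading M.
split.
- by move=> t; apply: H0.
- by move=> t x y; apply: HB.
- move=> v; have [n [d [x [Hx ->]]]] := HS v.
  exists n, (fun i => d i * s^-1)%g, x; split => // i.
  by rewrite mulgVK.
- move=> n d x injd Hx Hsum; apply: (HI n (fun i => d i * s)%g) => //.
  by move=> i j /mulIg /injd.
Qed.

Lemma susp_act_deg (M : grObj A) (s : Gam) :
  forall r t a (m : M), gr_deg r a -> go_deg (t * s)%g m ->
    go_deg ((r * t) * s)%g (go_act a m).
Proof. by move=> r t a m Ha Hm; rewrite -mulgA; apply: go_act_deg. Qed.

Definition susp (s : Gam) (M : grObj A) : grObj A :=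
  @GrObj A M (@go_act A M) (@go_actDl A M) (@go_actDr A M) (@go_actA A M)
    (fun t m => go_deg (t * s)%g m) (susp_grading M s)
    (@susp_act_deg M s) (@go_unital A M) (@go_tfree A M).

Lemma reg_actA (a b m : A) : nr_mul (nr_mul a b) m = nr_mul a (nr_mul b m).
Proof. by rewrite nr_mulA. Qed.

Definition regObj (HI : gr_idempotent A) (HT : gr_torsionfree A) : grObj A :=
  @GrObj A A (@nr_mul A) (@nr_mulDl A) (@nr_mulDr A) reg_actA
    (@gr_deg A) (@gr_grading A) (@gr_mul_deg A) HI (proj1 HT).

Lemma rmul_grhom HI HT (r : Gam) (a : A) (Ha : gr_deg r a) :
  @is_grhom (susp r^-1 (regObj HI HT)) (regObj HI HT) (fun x => nr_mul x a).
Proof.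
split.
- by move=> x y; rewrite /= nr_mulDl.
- by move=> b x; rewrite /= nr_mulA.
- move=> t x /= Hx; have := gr_mul_deg Hx Ha.
  by rewrite mulgVK.
Qed.

Definition rmulHom HI HT (r : Gam) (a : A) (Ha : gr_deg r a) :
  grHom (susp r^-1 (regObj HI HT)) (regObj HI HT) :=
  exist _ (fun x => nr_mul x a) (@rmul_grhom HI HT r a Ha).

End Mod.

Definition castO (B : grRing) (X Y : grObj B) (e : X = Y) (x : X) : Y :=
  eq_rect X (fun Z : grObj B => (Z : Type)) x Y e.

Record grFunctor (A B : grRing) := GrFunctor {
  fo : grObj A -> grObj B;
  fm : forall M N, grHom M N -> grHom (fo M) (fo N);
  fm_id : forall M (h : grHom M M), (forall x, sval h x = x) ->
            forall y, sval (fm h) y = y;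
  fm_comp : forall M N L (f : grHom M N) (g : grHom N L) (h : grHom M L),
            (forall x, sval h x = sval g (sval f x)) ->
            forall y, sval (fm h) y = sval (fm g) (sval (fm f) y);
  fm_add : forall M N (f g h : grHom M N),
            (forall x, sval h x = sval f x + sval g x) ->
            forall y, sval (fm h) y = sval (fm f) y + sval (fm g) y;
  fo_susp : forall s M, fo (susp s M) = susp s (fo M);
  fm_susp : forall s M N (f : grHom M N) (f' : grHom (susp s M) (susp s N)),
            (forall x, sval f' x = sval f x) ->
            forall y, castO (fo_susp s N) (sval (fm f') y)
                      = sval (fm f) (castO (fo_susp s M) y) }.

Definition inverse_equiv (A B : grRing) (F : grFunctor A B) (G : grFunctor B A) :=
  (exists eta : forall M : grObj A, grHom (fo G (fo F M)) M,
     (forall M, bijective (sval (eta M))) /\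
     (forall M M' (f : grHom M M') y,
        sval (eta M') (sval (fm G (fm F f)) y) = sval f (sval (eta M) y))) /\
  (exists eps : forall N : grObj B, grHom (fo F (fo G N)) N,
     (forall N, bijective (sval (eps N))) /\
     (forall N N' (g : grHom N N') y,
        sval (eps N') (sval (fm F (fm G g)) y) = sval g (sval (eps N) y))).

Section HOM.
Variables (A B : grRing) (F : grFunctor A B)
  (HI : gr_idempotent A) (HT : gr_torsionfree A).

Definition Qobj : grObj B := fo F (regObj HI HT).

(* right action q . a = F(rho_a)(q), for a homogeneous of degree r:
   F(rho_a) : F(A(r^-1)) = F(A)(r^-1) -> F(A) *)
Definition ract (r : Gam) (a : A) (Ha : gr_deg r a) (q : Qobj) : Qobj :=
  sval (fm F (@rmulHom A HI HT r a Ha))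
       (castO (esym (fo_susp F r^-1 (regObj HI HT))) q).

Definition inHOM (N : grObj B) (f : Qobj -> N) : Prop :=
  exists n (d : 'I_n -> Gam) (g : 'I_n -> Qobj -> N),
    (forall i, is_grmap (d i) (g i)) /\ forall q, f q = \sum_(i < n) g i q.

(* f in A . HOM_B(Q,N): finite sum of a_i f_i, (a f)(q) = f(q a);
   the a_i are taken homogeneous (the action being extended additively) *)
Definition inAHOM (N : grObj B) (f : Qobj -> N) : Prop :=
  exists n (d : 'I_n -> Gam) (a : 'I_n -> A) (Ha : forall i, gr_deg (d i) (a i))
         (h : 'I_n -> Qobj -> N),
    (forall i, inHOM (h i)) /\
    forall q, f q = \sum_(i < n) h i (ract (Ha i) q).

Definition HOM_repr (G : grFunctor B A) : Prop :=
  exists eta : forall N : grObj B, fo G N -> (Qobj -> N),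
    (forall N x y q, eta N (x + y) q = eta N x q + eta N y q) /\
    (forall N r a (Ha : gr_deg r a) x q,
        eta N (go_act a x) q = eta N x (ract Ha q)) /\
    (forall N s x, go_deg s x -> is_grmap s (eta N x)) /\
    (forall N x y, (forall q, eta N x q = eta N y q) -> x = y) /\
    (forall (N : grObj B) (f : Qobj -> N),
        inAHOM f <-> exists x, forall q, eta N x q = f q) /\
    (forall N N' (g : grHom N N') x q,
        eta N' (sval (fm G g) x) q = sval g (eta N x q)).

End HOM.
End Defs.

(* Main.v *)
Require Import Defs.
From HB Require Import structures.
From mathcomp Require Import all_boot all_algebra.
From Stdlib Require Import ProofIrrelevance FunctionalExtensionality PropExtensionality ClassicalEpsilon.
Set Implicit Arguments. Unset Strict Implicit. Unset Printing Implicit Defensive.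
Import GRing.Theory.
Local Open Scope ring_scope.

Definition castT (T U : Type) (e : T = U) (x : T) : U :=
  eq_rect T (fun X : Type => X) x U e.
Lemma castT_id T (e : T = T) x : castT e x = x.
Proof. by rewrite (proof_irrelevance _ e erefl). Qed.
Lemma castT_comp T U V (e1 : T = U) (e2 : U = V) x :
  castT e2 (castT e1 x) = castT (etrans e1 e2) x.
Proof. by case: V / e2; case: U / e1. Qed.
Lemma castT_pi T U (e1 e2 : T = U) x : castT e1 x = castT e2 x.
Proof. by rewrite (proof_irrelevance _ e1 e2). Qed.

Section Casts.
Variables (Gam : groupType) (B : grRing Gam) (X Y : grObj B) (e : X = Y).
Lemma castO_T x : castO e x = castT (f_equal (fun Z : grObj B => (Z : Type)) e) x.
Proof. by case: Y / e. Qed.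
Lemma castO_add x y : castO e (x + y) = castO e x + castO e y.
Proof. by case: Y / e. Qed.
Lemma castO_act b x : castO e (go_act b x) = go_act b (castO e x).
Proof. by case: Y / e. Qed.
Lemma castO_deg t x : go_deg t x -> go_deg t (castO e x).
Proof. by case: Y / e. Qed.
Lemma castO_K x : castO (esym e) (castO e x) = x.
Proof. by case: Y / e. Qed.
Lemma castO_Kr y : castO e (castO (esym e) y) = y.
Proof. by move: y; case: Y / e. Qed.
Lemma castO_inj : injective (castO e).
Proof. by move=> x y H; rewrite -(castO_K x) H castO_K. Qed.
Lemma castO0 : castO e 0 = 0.
Proof. by case: Y / e. Qed.
End Casts.

Section Additive.
Variables (V W : zmodType) (f : V -> W) (fD : forall x y, f (x + y) = f x + f y).
Lemma add0 : f 0 = 0.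
Proof. by apply: (@addrI _ (f 0)); rewrite -fD !addr0. Qed.
Lemma addN x : f (- x) = - f x.
Proof. by apply: (@addrI _ (f x)); rewrite -fD !subrr add0. Qed.
Lemma addB x y : f (x - y) = f x - f y.
Proof. by rewrite fD addN. Qed.
Lemma add_sum I (r : seq I) (P : pred I) (F : I -> V) :
  f (\sum_(i <- r | P i) F i) = \sum_(i <- r | P i) f (F i).
Proof.
elim: r => [|i r IH]; rewrite ?big_nil ?big_cons ?add0 //.
by case: (P i); rewrite ?fD IH.
Qed.
End Additive.

Lemma sum_pred1_uniq (T : eqType) (W : zmodType) (r : seq T) x (F : T -> W) :
  uniq r -> x \in r -> \sum_(s <- r | s == x) F s = F x.
Proof.
move=> ur xr; rewrite -big_filter.
have -> : [seq s <- r | s == x] = [:: x].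
  by rewrite -(filter_pred1_uniq ur xr); apply: eq_filter => s /=.
by rewrite big_seq1.
Qed.

Lemma group_sum (K : eqType) (I : eqType) (W : zmodType) (k : I -> K)
  (l : seq I) (P : pred K) (F : I -> W) :
  \sum_(p <- l | P (k p)) F p =
  \sum_(s <- undup (map k l) | P s) \sum_(p <- l | k p == s) F p.
Proof.
rewrite (eq_bigr (fun s => \sum_(p <- l) (if k p == s then F p else 0)));
  last by move=> s _; rewrite big_mkcond.
rewrite exchange_big /= big_mkcond /= big_seq [RHS]big_seq.
apply: eq_bigr => p pl.
rewrite -big_mkcondr.
have kin : k p \in undup (map k l) by rewrite mem_undup; apply: map_f.
case: (boolP (P (k p))) => Pk.
  rewrite (eq_bigl (fun s => s == k p)); first by rewrite sum_pred1_uniq ?undup_uniq.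
  by move=> s /=; rewrite eq_sym; case: (s =P k p) => [->|_]; rewrite ?Pk ?andbF.
rewrite big_pred0 // => s; case: eqP => [<-|_]; by rewrite ?andbF ?(negbTE Pk).
Qed.

Section Grading.
Variables (Gam : groupType) (V : zmodType) (D : Gam -> V -> Prop) (HD : is_grading D).

Lemma gD0 s : D s 0. Proof. by case: HD. Qed.
Lemma gDN s x : D s x -> D s (- x).
Proof. by case: HD => H0 HB _ _ Hx; rewrite -sub0r; apply: HB. Qed.
Lemma gDD s x y : D s x -> D s y -> D s (x + y).
Proof. by case: HD => H0 HB _ _ Hx Hy; rewrite -[y]opprK; apply: HB => //; apply: gDN. Qed.
Lemma gDsum s I (r : seq I) (P : pred I) (F : I -> V) :
  (forall i, P i -> D s (F i)) -> D s (\sum_(i <- r | P i) F i).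
Proof. by move=> H; apply: big_ind => //; [apply: gD0 | apply: gDD]. Qed.

Definition homs (l : seq (Gam * V)) := forall p, p \in l -> D p.1 p.2.

Lemma gDsum_seq (l : seq (Gam * V)) s : homs l -> D s (\sum_(p <- l | p.1 == s) p.2).
Proof.
move=> hl; rewrite big_seq_cond; apply: gDsum => p /andP [pl /eqP e].
by rewrite -e; apply: hl.
Qed.

Lemma dec_ex v : exists l, homs l /\ v = \sum_(p <- l) p.2.
Proof.
case: HD => _ _ HS _; have [n [d [x [Hx ->]]]] := HS v.
exists [seq (d i, x i) | i <- index_enum 'I_n]; split; last by rewrite big_map.
by move=> p /mapP [i _ ->]; apply: Hx.
Qed.

Lemma sum_group (l : seq (Gam * V)) :
  \sum_(p <- l) p.2 = \sum_(s <- undup (map fst l)) \sum_(p <- l | p.1 == s) p.2.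
Proof. exact: (group_sum fst l predT (fun p => p.2)). Qed.

Lemma grading_uniq l : homs l -> \sum_(p <- l) p.2 = 0 ->
  forall s, \sum_(p <- l | p.1 == s) p.2 = 0.
Proof.
move=> hl sum0 s.
set S := undup (map fst l).
pose c t := \sum_(p <- l | p.1 == t) p.2.
have sumS : \sum_(t <- S) c t = 0 by rewrite -[RHS]sum0 sum_group.
case: HD => _ _ _ HI.
have H := HI (size S) (fun i => nth 1%g S i) (fun i => c (nth 1%g S i)).
have {}H : forall i : 'I_(size S), c (nth 1%g S i) = 0.
  apply: H.
  - move=> i j /eqP; rewrite nth_uniq ?undup_uniq // => /eqP; apply: val_inj.
  - by move=> i; apply: gDsum_seq.
  - by rewrite -[RHS]sumS (big_nth 1%g) big_mkord.
case: (boolP (s \in S)) => sS.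
  by have := H (Ordinal (eq_ind_r is_true sS (index_mem s S) : (index s S < size S)%N)) => /=; rewrite nth_index.
apply: big1_seq => p /andP [/eqP ps pl]; case/negP: sS.
by rewrite mem_undup -ps; apply: map_f.
Qed.

End Grading.

Lemma deg_reflect (Gam : groupType) (V W : zmodType) (D : Gam -> V -> Prop) (E : Gam -> W -> Prop)
  (HD : is_grading D) (HE : is_grading E) (f : V -> W) :
  (forall x y, f (x + y) = f x + f y) -> injective f ->
  (forall t x, D t x -> E t (f x)) ->
  forall t y, E t (f y) -> D t y.
Proof.
move=> fD finj fdeg t y Ht.
have [l [hl ey]] := dec_ex HD y.
pose l2 := (t, - f y) :: [seq (p.1, f p.2) | p <- l].
have hl2 : homs E l2.
  move=> p; rewrite in_cons => /orP [/eqP -> /=|/mapP [q ql ->] /=].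
    by apply: gDN.
  by apply: fdeg; apply: hl.
have s2 : \sum_(p <- l2) p.2 = 0.
  by rewrite big_cons big_map /= -(add_sum fD) -ey addNr.
have cz : forall s, s != t -> \sum_(p <- l | p.1 == s) p.2 = 0.
  move=> s st; have := grading_uniq HE hl2 s2 s.
  rewrite big_cons /= eq_sym (negbTE st) big_map /= -(add_sum fD) => H.
  by apply: finj; rewrite H (add0 fD).
rewrite ey sum_group; apply: gDsum => // s _.
case: (boolP (s == t)) => [/eqP -> | st]; first by apply: gDsum_seq.
by rewrite cz //; apply: gD0.
Qed.

Section ObjUtil.
Variables (Gam : groupType) (A : grRing Gam).

Lemma hD (M N : grObj A) (f : grHom M N) x y : sval f (x + y) = sval f x + sval f y.
Proof. by case: (proj2_sig f). Qed.
Lemma hA (M N : grObj A) (f : grHom M N) a x : sval f (go_act a x) = go_act a (sval f x).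
Proof. by case: (proj2_sig f). Qed.
Lemma hdeg (M N : grObj A) (f : grHom M N) t x : go_deg t x -> go_deg t (sval f x).
Proof. by case: (proj2_sig f) => _ _; apply. Qed.
Lemma h0 (M N : grObj A) (f : grHom M N) : sval f 0 = 0.
Proof. exact: add0 (hD f). Qed.

Lemma act0 (M : grObj A) a : go_act a (0 : M) = 0.
Proof. exact: add0 (go_actDr a). Qed.

Lemma idH_proof (M : grObj A) : is_grhom (fun x : M => x).
Proof. by split. Qed.
Definition idH (M : grObj A) : grHom M M := exist _ _ (idH_proof M).

Lemma compH_proof (M N L : grObj A) (f : grHom M N) (g : grHom N L) :
  is_grhom (fun x => sval g (sval f x)).
Proof.
split; first by move=> x y; rewrite !hD.
  by move=> a x; rewrite !hA.
by move=> t x H; do 2 apply: hdeg.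
Qed.
Definition compH (M N L : grObj A) (f : grHom M N) (g : grHom N L) : grHom M L :=
  exist _ _ (compH_proof f g).

Lemma suspH_proof s (M N : grObj A) (f : grHom M N) :
  @is_grhom _ A (susp s M) (susp s N) (sval f).
Proof.
split; first by move=> x y; rewrite hD.
  by move=> a x; rewrite hA.
by move=> t x /= H; apply: hdeg.
Qed.
Definition suspH s (M N : grObj A) (f : grHom M N) : grHom (susp s M) (susp s N) :=
  exist _ _ (suspH_proof s f).

Lemma inv_grhom (M N : grObj A) (f : grHom M N) (g : N -> M) :
  cancel (sval f) g -> cancel g (sval f) -> is_grhom g.
Proof.
move=> fK gK; have finj := can_inj fK.
split.
- by move=> x y; apply: finj; rewrite hD !gK.
- by move=> a x; apply: finj; rewrite hA !gK.
- move=> t x H; apply: (deg_reflect (go_grading M) (go_grading N) (hD f) finj).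
    by move=> t' z; apply: hdeg.
  by rewrite gK.
Qed.

Lemma bij_ex (T U : Type) (f : T -> U) : bijective f -> exists g, cancel f g /\ cancel g f.
Proof. by case=> g fK gK; exists g. Qed.

Definition invf (T U : Type) (f : T -> U) (Hb : bijective f) : U -> T :=
  proj1_sig (constructive_indefinite_description _ (bij_ex Hb)).
Lemma invfK (T U : Type) (f : T -> U) (Hb : bijective f) : cancel f (invf Hb).
Proof. exact: (proj1 (proj2_sig (constructive_indefinite_description _ (bij_ex Hb)))). Qed.
Lemma invfKr (T U : Type) (f : T -> U) (Hb : bijective f) : cancel (invf Hb) f.
Proof. exact: (proj2 (proj2_sig (constructive_indefinite_description _ (bij_ex Hb)))). Qed.

Definition invH (M N : grObj A) (f : grHom M N) (Hb : bijective (sval f)) : grHom N M :=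
  exist _ _ (inv_grhom (invfK Hb) (invfKr Hb)).

Lemma GrObj_eq (V : zmodType) act p1 p2 p3 (d1 d2 : Gam -> V -> Prop) g1 g2 ad1 ad2 u tf :
  d1 = d2 ->
  @GrObj _ A V act p1 p2 p3 d1 g1 ad1 u tf = @GrObj _ A V act p1 p2 p3 d2 g2 ad2 u tf.
Proof. move=> E; subst d2; f_equal; apply: proof_irrelevance. Qed.

Lemma susp_comp (M : grObj A) s s' : susp s' (susp s M) = susp (s' * s)%g M.
Proof.
apply: GrObj_eq.
by do 2 (apply: functional_extensionality => ?); rewrite mulgA.
Qed.

Lemma susp_K (M : grObj A) r d : susp r^-1 (susp (r * d) M) = susp d M.
Proof. by rewrite susp_comp mulKg. Qed.

End ObjUtil.

Section FunUtil.
Variables (Gam : groupType) (A B : grRing Gam) (F : grFunctor A B).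

Lemma fm_ext (M N : grObj A) (f g : grHom M N) :
  (forall x, sval f x = sval g x) -> forall y, sval (fm F f) y = sval (fm F g) y.
Proof.
move=> H y.
rewrite (@fm_comp _ _ _ F M N N g (idH N) f) //.
by apply: fm_id.
Qed.

Lemma fm_zero (M N : grObj A) (f : grHom M N) :
  (forall x, sval f x = 0) -> forall y, sval (fm F f) y = 0.
Proof.
move=> H y.
have E : forall x, sval f x = sval f x + sval f x by move=> x; rewrite H addr0.
have := @fm_add _ _ _ F M N f f f E y.
by move/(congr1 (fun z => z - sval (fm F f) y)); rewrite subrr addrK.
Qed.

Lemma fm_transport (X Y : grObj A) (e : X = Y) (Z : grObj A) (f1 : grHom Z X) (f2 : grHom Z Y) :
  (forall z, sval f2 z = castO e (sval f1 z)) ->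
  forall y, sval (fm F f2) y = castO (f_equal (fo F) e) (sval (fm F f1) y).
Proof.
move: f2; case: Y / e => f2 H y /=.
by apply: fm_ext => z; rewrite H.
Qed.

End FunUtil.

Section Main.
Variables (Gam : groupType) (A B : grRing Gam) (HIA : gr_idempotent A) (HTA : gr_torsionfree A)
  (F : grFunctor A B) (G : grFunctor B A).
Variable eta0 : forall M : grObj A, grHom (fo G (fo F M)) M.
Hypothesis eta0_bij : forall M, bijective (sval (eta0 M)).
Hypothesis eta0_nat : forall M M' (f : grHom M M') y,
        sval (eta0 M') (sval (fm G (fm F f)) y) = sval f (sval (eta0 M) y).
Variable eps0 : forall N : grObj B, grHom (fo F (fo G N)) N.
Hypothesis eps0_bij : forall N, bijective (sval (eps0 N)).
Hypothesis eps0_nat : forall N N' (g : grHom N N') y,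
        sval (eps0 N') (sval (fm F (fm G g)) y) = sval g (sval (eps0 N) y).

Local Notation Areg := (regObj HIA HTA).
Local Notation Q := (Qobj F HIA HTA).
Local Notation rct Ha q := (@ract _ _ _ F HIA HTA _ _ Ha q).

Lemma lam_proof (M : grObj A) s (x : M) (Hx : go_deg s x) :
  @is_grhom _ A Areg (susp s M) (fun a => go_act a x).
Proof.
split.
- by move=> a b; rewrite go_actDl.
- by move=> a b /=; rewrite go_actA.
- by move=> t a /= Ha; apply: go_act_deg.
Qed.
Definition lam (M : grObj A) s (x : M) (Hx : go_deg s x) : grHom Areg (susp s M) :=
  exist _ _ (lam_proof Hx).

Definition Eh (N : grObj B) s (x : fo G N) (q : Q) : N :=
  match excluded_middle_informative (go_deg s x) with
  | left Hx => sval (eps0 N) (castO (fo_susp F s (fo G N)) (sval (fm F (lam Hx)) q))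
  | right _ => 0 end.
Arguments Eh : clear implicits.

Section FixN.
Variable N : grObj B.
Local Notation M := (fo G N).
Local Notation E := (Eh N).

Lemma EhE s (x : M) (Hx : go_deg s x) q :
  E s x q = sval (eps0 N) (castO (fo_susp F s M) (sval (fm F (lam Hx)) q)).
Proof.
rewrite /Eh; case: excluded_middle_informative => [H|//].
by rewrite (proof_irrelevance _ H Hx).
Qed.

Lemma EhD s (x y : M) q : go_deg s x -> go_deg s y -> E s (x + y) q = E s x q + E s y q.
Proof.
move=> Hx Hy; have Hxy := gDD (go_grading M) Hx Hy.
rewrite !(EhE _ _) (@fm_add _ _ _ F _ _ (lam Hx) (lam Hy) (lam Hxy)); last first.
  by move=> a /=; rewrite go_actDr.
by rewrite castO_add hD.
Qed.

Lemma Eh0 s q : E s 0 q = 0.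
Proof.
rewrite (EhE (gD0 (go_grading M) s)) (fm_zero (f := lam _)) ?castO0 ?h0 //.
by move=> a /=; rewrite act0.
Qed.

Lemma EhN s (x : M) q : go_deg s x -> E s (- x) q = - E s x q.
Proof.
move=> Hx; apply: (@addrI _ (E s x q)); rewrite -EhD ?subrr ?Eh0 //.
exact (gDN (go_grading M) Hx).
Qed.

Lemma Eh_sum s I (r : seq I) (P : pred I) (X : I -> M) q :
  (forall i, P i -> go_deg s (X i)) ->
  E s (\sum_(i <- r | P i) X i) q = \sum_(i <- r | P i) E s (X i) q.
Proof.
move=> H; elim: r => [|i r IH]; rewrite ?big_nil ?big_cons ?Eh0 //.
case: (boolP (P i)) => Pi //; rewrite EhD ?IH //; first by apply: H.
by apply: (gDsum (go_grading M)) => j; apply: H.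
Qed.

Lemma Eh_group (l : seq (Gam * M)) q : homs (@go_deg _ _ M) l ->
  \sum_(p <- l) E p.1 p.2 q =
  \sum_(s <- undup (map fst l)) E s (\sum_(p <- l | p.1 == s) p.2) q.
Proof.
move=> hl.
rewrite (group_sum fst l predT (fun p => E p.1 p.2 q)).
apply: eq_bigr => s _.
rewrite big_seq_cond [in RHS]big_seq_cond Eh_sum.
  by apply: eq_bigr => p /andP [_ /eqP ->].
by move=> p /andP [pl /eqP <-]; apply: hl.
Qed.

Lemma Eh_zero_sum (l : seq (Gam * M)) q : homs (@go_deg _ _ M) l ->
  \sum_(p <- l) p.2 = 0 -> \sum_(p <- l) E p.1 p.2 q = 0.
Proof.
move=> hl s0; rewrite Eh_group //; apply: big1 => s _.
by rewrite (grading_uniq (go_grading M) hl s0) Eh0.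
Qed.

Lemma Eh_wd (l1 l2 : seq (Gam * M)) q : homs (@go_deg _ _ M) l1 -> homs (@go_deg _ _ M) l2 ->
  \sum_(p <- l1) p.2 = \sum_(p <- l2) p.2 ->
  \sum_(p <- l1) E p.1 p.2 q = \sum_(p <- l2) E p.1 p.2 q.
Proof.
move=> h1 h2 e.
pose l := l1 ++ [seq (p.1, - p.2) | p <- l2].
have hl : homs (@go_deg _ _ M) l.
  move=> p; rewrite mem_cat => /orP [/h1 //|/mapP [p' /h2 H ->] /=].
  exact (gDN (go_grading M) H).
have := Eh_zero_sum q hl.
rewrite /l !big_cat !big_map /= sumrN e subrr => /(_ erefl) /eqP.
rewrite [X in _ + X]big_seq [X in _ + X](eq_bigr (fun p => - E p.1 p.2 q)); last first.
  by move=> p pl; rewrite EhN //; apply: h2.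
by rewrite -big_seq sumrN subr_eq0 => /eqP.
Qed.


Definition dec (x : M) : seq (Gam * M) :=
  proj1_sig (constructive_indefinite_description _ (dec_ex (go_grading M) x)).
Lemma decP x : homs (@go_deg _ _ M) (dec x) /\ x = \sum_(p <- dec x) p.2.
Proof. exact: (proj2_sig (constructive_indefinite_description _ (dec_ex (go_grading M) x))). Qed.

Definition eta (x : M) (q : Q) : N := \sum_(p <- dec x) E p.1 p.2 q.

Lemma etaE (l : seq (Gam * M)) x q : homs (@go_deg _ _ M) l -> x = \sum_(p <- l) p.2 ->
  eta x q = \sum_(p <- l) E p.1 p.2 q.
Proof. by move=> hl ex; case: (decP x) => hd ed; apply: Eh_wd => //; rewrite -ed -ex. Qed.

Lemma eta_hom s x q : go_deg s x -> eta x q = E s x q.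
Proof.
move=> Hx; rewrite (@etaE [:: (s, x)]) ?big_seq1 //.
by move=> p; rewrite inE => /eqP ->.
Qed.

Lemma etaD x y q : eta (x + y) q = eta x q + eta y q.
Proof.
case: (decP x) => hx ex; case: (decP y) => hy ey.
rewrite (@etaE (dec x ++ dec y)); first by rewrite big_cat.
  by move=> p; rewrite mem_cat => /orP [/hx|/hy].
by rewrite big_cat -ex -ey.
Qed.

Lemma EhG s x : go_deg s x -> is_grmap s (E s x).
Proof.
move=> Hx; split.
- by move=> q1 q2; rewrite !(EhE Hx) hD castO_add hD.
- by move=> b q; rewrite !(EhE Hx) hA castO_act hA.
- move=> t q Hq; rewrite (EhE Hx).
  exact: (hdeg (eps0 N) (castO_deg (fo_susp F s M) (hdeg (fm F (lam Hx)) Hq))).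
Qed.

Lemma lemL d (psi : grHom Areg (susp d M)) r (a : A) (Ha : gr_deg r a) q :
  E (r * d)%g (sval psi a) q =
  sval (eps0 N) (castO (fo_susp F d M) (sval (fm F psi) (rct Ha q))).
Proof.
have Hx : @go_deg _ _ M (r * d)%g (sval psi a) := hdeg psi Ha.
rewrite (EhE Hx); congr (sval _ _).
have -> : rct Ha q = sval (fm F (rmulHom HIA HTA Ha)) (castO (esym (fo_susp F r^-1 Areg)) q) by [].
rewrite -(@fm_comp _ _ _ F _ _ _ (rmulHom HIA HTA Ha) psi (compH (rmulHom HIA HTA Ha) psi)) //.
have E1 := @fm_susp _ _ _ F r^-1 Areg (susp (r * d) M) (lam Hx) (suspH r^-1 (lam Hx)) (fun _ => erefl)
   (castO (esym (fo_susp F r^-1 Areg)) q).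
rewrite castO_Kr in E1.
rewrite -E1.
rewrite (@fm_transport _ _ _ F _ _ (susp_K M r d) _ (suspH r^-1 (lam Hx)) (compH (rmulHom HIA HTA Ha) psi)); last first.
  move=> z /=; rewrite castO_T; symmetry; etransitivity; first by apply: castT_id.
  exact: (esym (hA psi z a)).
by rewrite !castO_T !castT_comp; apply: castT_pi.
Qed.

Lemma Lin s (x : M) (Hx : go_deg s x) r (a : A) (Ha : gr_deg r a) q :
  E (r * s)%g (go_act a x) q = E s x (rct Ha q).
Proof. rewrite (EhE Hx); exact: (lemL (lam Hx) Ha q). Qed.

Lemma eta_lin r (a : A) (Ha : gr_deg r a) x q : eta (go_act a x) q = eta x (rct Ha q).
Proof.
case: (decP x) => hx ex.
rewrite (@etaE [seq ((r * p.1)%g, go_act a p.2) | p <- dec x]).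
- rewrite big_map /eta; apply: eq_big_seq => p pl /=; apply: Lin; exact: hx.
- move=> p /mapP [p' pl ->] /=; apply: go_act_deg => //; exact: hx.
- by rewrite big_map {1}ex (add_sum (go_actDr a)).
Qed.


Lemma EhZ s (c : M) : go_deg s c -> (forall q, E s c q = 0) -> c = 0.
Proof.
move=> Hc H.
have H1 : forall q, sval (fm F (lam Hc)) q = 0.
  move=> q; have := H q; rewrite (EhE Hc) -(h0 (eps0 N)) => /(bij_inj (eps0_bij N)).
  rewrite -(castO0 (fo_susp F s M)) => E. exact (@castO_inj _ _ _ _ (fo_susp F s M) _ _ E).
have H2 := @fm_zero _ _ _ G _ _ (fm F (lam Hc)) H1.
apply: go_tfree => a.
case: (eta0_bij Areg) => g _ gK.
have := eta0_nat (lam Hc) (g a).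
by rewrite H2 h0 gK /= => <-.
Qed.

Lemma gmD d (f : Q -> N) : is_grmap d f -> forall x y, f (x + y) = f x + f y.
Proof. by case. Qed.

Lemma eta_inj0 x : (forall q, eta x q = 0) -> x = 0.
Proof.
move=> H; case: (decP x) => hx ex.
pose l := dec x.
pose c s := \sum_(p <- l | p.1 == s) p.2.
have Hc s : go_deg s (c s) := gDsum_seq (go_grading M) s hx.
have Eg q : eta x q = \sum_(s <- undup (map fst l)) E s (c s) q by rewrite /eta Eh_group.
have Z : forall s, s \in undup (map fst l) -> c s = 0.
  move=> s0 s0in; apply: (EhZ (Hc s0)) => q.
  have [lq [hq eqq]] := dec_ex (go_grading Q) q.
  rewrite eqq (add_sum (gmD (EhG (Hc s0)))).
  apply: big1_seq => p /andP [_ pl].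
  have Hq' := hq p pl.
  pose lq2 := [seq ((p.1 * s)%g, E s (c s) p.2) | s <- undup (map fst l)].
  have hq2 : homs (@go_deg _ _ N) lq2.
    move=> p2 /mapP [s _ ->] /=; by case: (EhG (Hc s)) => _ _; apply.
  have s0q : \sum_(p2 <- lq2) p2.2 = 0 by rewrite big_map -Eg H.
  have := grading_uniq (go_grading N) hq2 s0q (p.1 * s0)%g.
  rewrite big_map (eq_bigl (fun s => s == s0)); last by move=> s /=; rewrite (inj_eq (mulgI p.1)).
  by rewrite sum_pred1_uniq ?undup_uniq.
rewrite ex sum_group big_seq; apply: big1 => s sin; exact: Z.
Qed.

End FixN.

Arguments eta : clear implicits.

Lemma EhNat N N' (g : grHom N N') s (x : fo G N) q : go_deg s x ->
  Eh N' s (sval (fm G g) x) q = sval g (Eh N s x q).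
Proof.
move=> Hx; have Hgx : go_deg s (sval (fm G g) x) := hdeg (fm G g) Hx.
rewrite (EhE Hgx) (EhE Hx) -eps0_nat.
congr (sval _ _).
rewrite (@fm_comp _ _ _ F _ _ _ (lam Hx) (suspH s (fm G g)) (lam Hgx)); last by move=> a /=; rewrite hA.
exact: (@fm_susp _ _ _ F s _ _ (fm G g) (suspH s (fm G g)) (fun _ => erefl) _).
Qed.

Lemma eta_nat N N' (g : grHom N N') x q : eta N' (sval (fm G g) x) q = sval g (eta N x q).
Proof.
case: (decP x) => hx ex.
rewrite (@etaE N' [seq (p.1, sval (fm G g) p.2) | p <- dec x]).
- rewrite big_map /eta (add_sum (hD g)); apply: eq_big_seq => p pl /=; apply: EhNat; exact: hx.
- move=> p /mapP [p' pl ->] /=; apply: hdeg; exact: hx.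
- by rewrite big_map {1}ex (add_sum (hD _)).
Qed.

Lemma G_faithful (P P' : grObj B) (u v : grHom P P') :
  (forall z, sval (fm G u) z = sval (fm G v) z) -> forall y, sval u y = sval v y.
Proof.
move=> H y; case: (eps0_bij P) => e eK Ke.
rewrite -(Ke y) -!eps0_nat; congr (sval _ _); exact: (@fm_ext _ _ _ F _ _ (fm G u) (fm G v) H).
Qed.

Lemma F_full (X Y : grObj A) (h : grHom (fo F X) (fo F Y)) :
  exists psi : grHom X Y, forall y, sval (fm F psi) y = sval h y.
Proof.
exists (compH (compH (invH (eta0_bij X)) (fm G h)) (eta0 Y)).
apply: G_faithful => z.
apply: (bij_inj (eta0_bij Y)); rewrite eta0_nat /=.
by rewrite invfK.
Qed.

Lemma surj_core (N : grObj B) d (g : Q -> N) : is_grmap d g ->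
  exists psi : grHom Areg (susp d (fo G N)),
    forall q, sval (eps0 N) (castO (fo_susp F d (fo G N)) (sval (fm F psi) q)) = g q.
Proof.
case=> gD gA gdeg.
pose iv := invH (eps0_bij N).
have hp : @is_grhom _ B Q (fo F (susp d (fo G N)))
   (fun q => castO (esym (fo_susp F d (fo G N))) (sval iv (g q))).
  split.
  - by move=> q1 q2; rewrite gD hD castO_add.
  - by move=> b q; rewrite gA hA castO_act.
  - move=> t q Hq; apply: castO_deg; exact: (hdeg iv (gdeg _ _ Hq)).
have [psi Hpsi] := F_full (exist _ _ hp).
exists psi => q; rewrite Hpsi /= castO_Kr.
exact: invfKr.
Qed.

Lemma surj1 (N : grObj B) d (g : Q -> N) r (a : A) (Ha : gr_deg r a) : is_grmap d g ->
  exists x, forall q, eta N x q = g (rct Ha q).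
Proof.
move=> gg; have [psi Hpsi] := surj_core gg.
exists (sval psi a) => q.
have Hx : @go_deg _ _ (fo G N) (r * d)%g (sval psi a) := hdeg psi Ha.
by rewrite (eta_hom _ Hx) lemL Hpsi.
Qed.


Definition catf T n1 n2 (f1 : 'I_n1 -> T) (f2 : 'I_n2 -> T) (i : 'I_(n1 + n2)) : T :=
  match split i with inl j => f1 j | inr k => f2 k end.
Lemma catfl T n1 n2 (f1 : 'I_n1 -> T) (f2 : 'I_n2 -> T) j : catf f1 f2 (lshift n2 j) = f1 j.
Proof. by rewrite /catf (unsplitK (inl _ j)). Qed.
Lemma catfr T n1 n2 (f1 : 'I_n1 -> T) (f2 : 'I_n2 -> T) k : catf f1 f2 (rshift n1 k) = f2 k.
Proof. by rewrite /catf (unsplitK (inr _ k)). Qed.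
Lemma sum_catf (W : zmodType) n1 n2 (f1 : 'I_n1 -> W) (f2 : 'I_n2 -> W) :
  \sum_(i < n1 + n2) catf f1 f2 i = \sum_(i < n1) f1 i + \sum_(i < n2) f2 i.
Proof. by rewrite big_split_ord; congr (_ + _); apply: eq_bigr => i _; rewrite ?catfl ?catfr. Qed.

Section Closure.
Variable N : grObj B.
Local Notation IH := (@inHOM _ _ _ F HIA HTA N).

Lemma inHOM_ext (f1 f2 : Q -> N) : (forall q, f1 q = f2 q) -> IH f1 -> IH f2.
Proof.
move=> e [n [d [g [hg hq]]]]; exists n, d, g; split => // q; by rewrite -e.
Qed.
Lemma inHOM0 : IH (fun _ => 0).
Proof.
exists 0%N, (fun _ => 1%g), (fun _ _ => 0); split; last by move=> q; rewrite big_ord0.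
by case.
Qed.
Lemma inHOM_add (f1 f2 : Q -> N) : IH f1 -> IH f2 -> IH (fun q => f1 q + f2 q).
Proof.
move=> [n1 [d1 [g1 [hg1 hq1]]]] [n2 [d2 [g2 [hg2 hq2]]]].
exists (n1 + n2)%N, (catf d1 d2), (catf g1 g2); split.
  by move=> i; rewrite /catf; case: (split i).
move=> q; rewrite hq1 hq2 -sum_catf; apply: eq_bigr => i _.
by rewrite /catf; case: (split i).
Qed.
Lemma inHOM_map d (g : Q -> N) : is_grmap d g -> IH g.
Proof.
move=> hg; exists 1%N, (fun _ => d), (fun _ => g); split => // q.
by rewrite big_ord1.
Qed.
Lemma inHOM_sum (I : eqType) (r : seq I) (f : I -> Q -> N) :
  (forall i, i \in r -> IH (f i)) -> IH (fun q => \sum_(i <- r) f i q).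
Proof.
elim: r => [|i r IHr] H.
  by apply: (inHOM_ext _ inHOM0) => q; rewrite big_nil.
apply: (inHOM_ext (f1 := fun q => f i q + \sum_(j <- r) f j q)).
  by move=> q; rewrite big_cons.
apply: inHOM_add; first by apply: H; rewrite inE eqxx.
by apply: IHr => j jr; apply: H; rewrite inE jr orbT.
Qed.

Definition ractP r (a : A) (q : Q) : Q :=
  match excluded_middle_informative (gr_deg r a) with
  | left H => rct H q | right _ => 0 end.
Lemma ractPE r (a : A) (Ha : gr_deg r a) q : rct Ha q = ractP r a q.
Proof.
rewrite /ractP; case: excluded_middle_informative => [H|//].
by rewrite (proof_irrelevance _ H Ha).
Qed.

Definition inAH (f : Q -> N) := exists n (d : 'I_n -> Gam) (a : 'I_n -> A) (h : 'I_n -> Q -> N),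
  (forall i, gr_deg (d i) (a i)) /\ (forall i, IH (h i)) /\
  forall q, f q = \sum_(i < n) h i (ractP (d i) (a i) q).

Lemma inAH_iff (f : Q -> N) : @inAHOM _ _ _ F HIA HTA N f <-> inAH f.
Proof.
split.
  move=> [n [d [a [Ha [h [hh fq]]]]]]; exists n, d, a, h; split => //; split => // q.
  by rewrite fq; apply: eq_bigr => i _; rewrite ractPE.
move=> [n [d [a [h [Ha [hh fq]]]]]]; exists n, d, a, Ha, h; split => // q.
by rewrite fq; apply: eq_bigr => i _; rewrite ractPE.
Qed.

Lemma inAH_ext (f1 f2 : Q -> N) : (forall q, f1 q = f2 q) -> inAH f1 -> inAH f2.
Proof.
move=> e [n [d [a [h [Ha [hh hq]]]]]]; exists n, d, a, h; split => //; split => // q.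
by rewrite -e.
Qed.
Lemma inAH0 : inAH (fun _ => 0).
Proof.
exists 0%N, (fun _ => 1%g), (fun _ => 0), (fun _ _ => 0); split; first by case.
by split; [case | move=> q; rewrite big_ord0].
Qed.
Lemma inAH_add (f1 f2 : Q -> N) : inAH f1 -> inAH f2 -> inAH (fun q => f1 q + f2 q).
Proof.
move=> [n1 [d1 [a1 [h1 [Ha1 [hh1 hq1]]]]]] [n2 [d2 [a2 [h2 [Ha2 [hh2 hq2]]]]]].
exists (n1 + n2)%N, (catf d1 d2), (catf a1 a2), (catf h1 h2); split.
  by move=> i; rewrite /catf; case: (split i).
split; first by move=> i; rewrite /catf; case: (split i).
move=> q; rewrite hq1 hq2 -sum_catf; apply: eq_bigr => i _.
by rewrite /catf; case: (split i).
Qed.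
Lemma inAH_single r (a : A) (h : Q -> N) : gr_deg r a -> IH h -> inAH (fun q => h (ractP r a q)).
Proof.
move=> Ha hh; exists 1%N, (fun _ => r), (fun _ => a), (fun _ => h); split => //; split => // q.
by rewrite big_ord1.
Qed.
Lemma inAH_sum (I : eqType) (r : seq I) (f : I -> Q -> N) :
  (forall i, i \in r -> inAH (f i)) -> inAH (fun q => \sum_(i <- r) f i q).
Proof.
elim: r => [|i r IHr] H.
  by apply: (inAH_ext _ inAH0) => q; rewrite big_nil.
apply: (inAH_ext (f1 := fun q => f i q + \sum_(j <- r) f j q)).
  by move=> q; rewrite big_cons.
apply: inAH_add; first by apply: H; rewrite inE eqxx.
by apply: IHr => j jr; apply: H; rewrite inE jr orbT.
Qed.

Lemma eta_inHOM (y : fo G N) : IH (eta N y).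
Proof.
case: (decP y) => hy _.
apply: (inHOM_sum (f := fun p q => Eh N p.1 p.2 q)) => p pl.
apply: (inHOM_map (d := p.1)); apply: EhG; exact: hy.
Qed.

Lemma image_sub (x : fo G N) : inAH (eta N x).
Proof.
have [n [a [xs ex]]] := go_unital x.
apply: (inAH_ext (f1 := fun q => \sum_(i < n) eta N (go_act (a i) (xs i)) q)).
  by move=> q; rewrite ex (add_sum (fun u v => etaD u v q)).
apply: inAH_sum => i _.
have [la [hla ea]] := dec_ex (gr_grading A) (a i).
apply: (inAH_ext (f1 := fun q => \sum_(p <- la) eta N (go_act p.2 (xs i)) q)).
  move=> q; rewrite [in RHS]ea (add_sum (fun u v => go_actDl u v (xs i))).
  by rewrite (add_sum (fun u v => etaD u v q)).
apply: inAH_sum => p pl.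
have Hp := hla p pl.
apply: (inAH_ext (f1 := fun q => eta N (xs i) (ractP p.1 p.2 q))).
  by move=> q; rewrite (eta_lin Hp) ractPE.
apply: inAH_single => //; exact: eta_inHOM.
Qed.

Lemma sum_choice n (u : 'I_n -> Q -> N) :
  (forall j, exists x, forall q, eta N x q = u j q) ->
  exists x, forall q, eta N x q = \sum_(j < n) u j q.
Proof.
move=> H.
pose xs j := proj1_sig (constructive_indefinite_description _ (H j)).
have Hxs j : forall q, eta N (xs j) q = u j q :=
  proj2_sig (constructive_indefinite_description _ (H j)).
exists (\sum_(j < n) xs j) => q.
rewrite (add_sum (fun u v => etaD u v q)); apply: eq_bigr => j _; exact: Hxs.
Qed.

Lemma image_sup (f : Q -> N) : inAH f -> exists x, forall q, eta N x q = f q.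
Proof.
move=> [n [d [a [h [Ha [hh fq]]]]]].
have [x Hx] : exists x, forall q, eta N x q = \sum_(i < n) h i (ractP (d i) (a i) q).
  apply: sum_choice => i.
  have [m [dd [gg [hg hq]]]] := hh i.
  have [x Hx] : exists x, forall q, eta N x q = \sum_(j < m) gg j (rct (Ha i) q).
    apply: sum_choice => j; exact: surj1.
  by exists x => q; rewrite Hx hq ractPE.
by exists x => q; rewrite Hx fq.
Qed.

End Closure.

Lemma main_repr : HOM_repr F HIA HTA G.
Proof.
exists (fun N x q => eta N x q).
split; first by move=> N x y q; exact: etaD.
split; first by move=> N r a Ha x q; exact: eta_lin.
split.
  move=> N s x Hx.
  have -> : eta N x = Eh N s x by apply: functional_extensionality => q; exact: eta_hom.
  exact: EhG.
split.
  move=> N x y H; apply/eqP; rewrite -subr_eq0; apply/eqP; apply: eta_inj0 => q.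
  by rewrite etaD (addN (fun u v => etaD u v q)) H subrr.
split.
  move=> N f; split.
    by move/inAH_iff; exact: image_sup.
  move=> [x Hx]; apply/inAH_iff; exact: (inAH_ext Hx (image_sub x)).
by move=> N N' g x q; exact: eta_nat.
Qed.

End Main.

Theorem proposition3p9 (Gam : groupType) (A B : grRing Gam)
  (HIA : gr_idempotent A) (HTA : gr_torsionfree A)
  (HIB : gr_idempotent B) (HTB : gr_torsionfree B)
  (F : grFunctor A B) (G : grFunctor B A) :
  inverse_equiv F G ->
  HOM_repr F HIA HTA G /\ HOM_repr G HIB HTB F.
Proof.
case=> [[eta0 [b0 n0]] [eps0 [b1 n1]]]; split.
  exact: (main_repr HIA HTA b0 n0 b1 n1).
exact: (main_repr HIB HTB b1 n1 b0 n0).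
Qed.
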